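(* Let $n\geq 3$, let $H$ be a $1$-dimensional linear subspace of $\mathbb{R}^n$, and let $O(n)_H=\{\psi\in O(n): \psi x=x \text{ for all } x\in H\}$ be its pointwise stabilizer in $O(n)$. Let $\phi\in O(n)$ be such that $\phi H\neq H$. If $E\subset S^{n-1}$ is nonempty, closed, and satisfies $\phi E=E$ and $\psi E=E$ for every $\psi\in O(n)_H$, then $E=S^{n-1}$.
   Context: $S^{n-1}$ is the unit sphere in $\mathbb{R}^n$ and $O(n)$ the orthogonal group. *)

(* Defs.v *)
(* Vectors of R^n are row vectors 'rV[R]_n,
   a matrix acts on the right: x |-> x *m A. *)
From HB Require Import structures.
From mathcomp Require Import all_boot all_order all_algebra.
From mathcomp Require Import all_classical all_reals all_analysis.
Set Implicit Arguments. Unset Strict Implicit. Unset Printing Implicit Defensive.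
Import Order.TTheory GRing.Theory Num.Theory.
Import numFieldNormedType.Exports.
Local Open Scope ring_scope.
Local Open Scope classical_set_scope.

Definition dotv {R : realType} {n : nat} (x y : 'rV[R]_n) : R :=
  \sum_(i < n) x ord0 i * y ord0 i.

Definition sphere (R : realType) (n : nat) : set 'rV[R]_n :=
  [set x | dotv x x = 1].

Definition orthogonal_mx {R : realType} {n : nat} (Q : 'M[R]_n) : Prop :=
  Q *m Q^T = 1%:M.

Definition subspace_of {R : realType} {m n : nat} (H : 'M[R]_(m, n)) : set 'rV[R]_n :=
  [set x | (x <= H)%MS].

Definition mx_image {R : realType} {n : nat} (A : 'M[R]_n) (E : set 'rV[R]_n) : set 'rV[R]_n :=
  [set x *m A | x in E].

(* Main.v *)
Require Import Defs.
From HB Require Import structures.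
From mathcomp Require Import all_boot all_order all_algebra.
From mathcomp Require Import all_classical all_reals all_analysis.
From mathcomp Require Import ring lra zify.
Import Order.TTheory GRing.Theory Num.Theory.
Import numFieldNormedType.Exports.
Local Open Scope ring_scope.
Local Open Scope classical_set_scope.
Lemma dotvE {R : realType} {n : nat} (x y : 'rV[R]_n) : dotv x y = (x *m y^T) 0 0.
Proof. by rewrite /dotv mxE; apply: eq_bigr => i _; rewrite mxE. Qed.

Lemma dotvC {R : realType} {n : nat} (x y : 'rV[R]_n) : dotv x y = dotv y x.
Proof. by rewrite /dotv; apply: eq_bigr => i _; rewrite mulrC. Qed.

Lemma dotvDl {R : realType} {n : nat} (x y z : 'rV[R]_n) : dotv (x + y) z = dotv x z + dotv y z.
Proof. by rewrite /dotv -big_split; apply: eq_bigr => i _; rewrite mxE mulrDl. Qed.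

Lemma dotvZl {R : realType} {n : nat} k (x z : 'rV[R]_n) : dotv (k *: x) z = k * dotv x z.
Proof. by rewrite /dotv mulr_sumr; apply: eq_bigr => i _; rewrite mxE mulrA. Qed.

Lemma dotvNl {R : realType} {n : nat} (x z : 'rV[R]_n) : dotv (- x) z = - dotv x z.
Proof. by rewrite -scaleN1r dotvZl mulN1r. Qed.

Lemma dotvBl {R : realType} {n : nat} (x y z : 'rV[R]_n) : dotv (x - y) z = dotv x z - dotv y z.
Proof. by rewrite dotvDl dotvNl. Qed.

Lemma dotvDr {R : realType} {n : nat} (x y z : 'rV[R]_n) : dotv z (x + y) = dotv z x + dotv z y.
Proof. by rewrite ![dotv z _]dotvC dotvDl. Qed.

Lemma dotvZr {R : realType} {n : nat} k (x z : 'rV[R]_n) : dotv z (k *: x) = k * dotv z x.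
Proof. by rewrite ![dotv z _]dotvC dotvZl. Qed.

Lemma dotvBr {R : realType} {n : nat} (x y z : 'rV[R]_n) : dotv z (x - y) = dotv z x - dotv z y.
Proof. by rewrite ![dotv z _]dotvC dotvBl. Qed.

Lemma dotvMl {R : realType} {n : nat} (x y : 'rV[R]_n) (A : 'M[R]_n) :
  dotv (x *m A) y = dotv x (y *m A^T).
Proof. by rewrite !dotvE trmx_mul trmxK mulmxA. Qed.

Lemma dotv_ge0 {R : realType} {n : nat} (x : 'rV[R]_n) : 0 <= dotv x x.
Proof. by apply: sumr_ge0 => i _; rewrite -expr2 sqr_ge0. Qed.

Lemma dotv_eq0 {R : realType} {n : nat} (x : 'rV[R]_n) : dotv x x = 0 -> x = 0.
Proof.
move=> h; apply/rowP => i; rewrite mxE.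
have := @psumr_eq0P R _ xpredT (fun i => x 0 i * x 0 i).
move=> /(_ (fun i _ => ltac:(by rewrite -expr2 sqr_ge0)) h i isT) /eqP.
by rewrite mulf_eq0 orbb => /eqP.
Qed.

Lemma mulmx_rV11 {R : realType} {n : nat} (x y : 'rV[R]_n) : x *m y^T *m y = dotv x y *: y.
Proof. by rewrite [x *m y^T]mx11_scalar mul_scalar_mx dotvE. Qed.

Definition hh {R : realType} {n : nat} (v : 'rV[R]_n) : 'M[R]_n :=
  1%:M - (2 / dotv v v) *: (v^T *m v).

Lemma hh_apply {R : realType} {n : nat} (x v : 'rV[R]_n) :
  x *m hh v = x - (2 * dotv x v / dotv v v) *: v.
Proof.
rewrite /hh mulmxBr mulmx1 -scalemxAr mulmxA mulmx_rV11 scalerA.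
by rewrite mulrAC.
Qed.

Lemma hh_orth {R : realType} {n : nat} (v : 'rV[R]_n) : dotv v v != 0 -> orthogonal_mx (hh v).
Proof.
move=> nz; rewrite /orthogonal_mx.
have -> : (hh v)^T = hh v.
  by rewrite /hh linearB /= linearZ /= trmx1 trmx_mul trmxK.
apply/row_matrixP => i; rewrite !rowE mulmxA !hh_apply.
set a := dotv _ v.
rewrite mulmx1 dotvBl dotvZl -addrA -opprD -scalerDl /a.
set k := (X in X *: v); have -> : k = 0 by rewrite /k; field.
by rewrite scale0r oppr0 addr0.
Qed.

Lemma orth_tr {R : realType} {n : nat} {A : 'M[R]_n} : orthogonal_mx A -> A^T *m A = 1%:M.
Proof. by move/mulmx1C. Qed.

Lemma orth_mul {R : realType} {n : nat} {A B : 'M[R]_n} :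
  orthogonal_mx A -> orthogonal_mx B -> orthogonal_mx (A *m B).
Proof.
rewrite /orthogonal_mx => hA hB.
by rewrite trmx_mul mulmxA -(mulmxA A) hB mulmx1 hA.
Qed.

Lemma orth_trT {R : realType} {n : nat} {A : 'M[R]_n} : orthogonal_mx A -> orthogonal_mx A^T.
Proof. by move=> hA; rewrite /orthogonal_mx trmxK orth_tr. Qed.

Definition invE {R : realType} {n : nat} (E : set 'rV[R]_n) (H0 : 'rV[R]_n) :=
  forall psi, orthogonal_mx psi -> H0 *m psi = H0 -> forall x, E x -> E (x *m psi).

Lemma levelA {R : realType} {n : nat} (E : set 'rV[R]_n) H0 x y :
  invE E H0 -> E x -> dotv x x = dotv y y -> dotv x H0 = dotv y H0 -> E y.
Proof.
move=> inv Ex hxy hH.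
case: (eqVneq x y) => [<-//|xy].
set v := x - y.
have nz : dotv v v != 0.
  by apply/eqP => /dotv_eq0 /eqP; rewrite subr_eq0 (negbTE xy).
have e1 : dotv v v = 2 * dotv x v.
  by rewrite /v !dotvBl !dotvBr (dotvC y x) hxy; ring.
have Hf : H0 *m hh v = H0.
  rewrite hh_apply (_ : dotv H0 v = 0) ?mulr0 ?mul0r ?scale0r ?subr0 //.
  by rewrite /v dotvBr (dotvC H0 x) (dotvC H0 y) hH subrr.
have xv : x *m hh v = y.
  rewrite hh_apply e1 (_ : 2 * dotv x v / (2 * dotv x v) = 1).
    by rewrite scale1r /v opprB addrC subrK.
  apply: divff; by rewrite -e1.
by rewrite -xv; apply: inv => //; apply: hh_orth.
Qed.

Lemma invE_scale {R : realType} {n : nat} (E : set 'rV[R]_n) H0 k :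
  k != 0 -> invE E H0 -> invE E (k *: H0).
Proof.
move=> k0 inv psi opsi hf x Ex; apply: inv => //.
by move: hf; rewrite -scalemxAl => /(congr1 (fun z => k^-1 *: z)); rewrite !scalerA mulVf // !scale1r.
Qed.

Lemma invE_phi {R : realType} {n : nat} (E : set 'rV[R]_n) H0 phi :
  orthogonal_mx phi -> mx_image phi E = E -> invE E H0 -> invE E (H0 *m phi).
Proof.
move=> ophi imE inv psi opsi hf x Ex.
have ophi' : phi *m phi^T = 1%:M := ophi.
have fwd : forall z, E z -> E (z *m phi).
  by move=> z Ez; rewrite -imE; exists z.
have bwd : forall z, E z -> E (z *m phi^T).
  move=> z; rewrite -{1}imE => -[z' Ez' <-].
  by rewrite -mulmxA ophi' mulmx1.
have -> : x *m psi = (x *m phi^T *m (phi *m psi *m phi^T)) *m phi.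
  by rewrite !mulmxA -(mulmxA x) (orth_tr ophi) mulmx1 -!mulmxA (orth_tr ophi) mulmx1.
apply: fwd; apply: inv; last exact: bwd.
  by apply: orth_mul; [apply: orth_mul|apply: orth_trT].
by rewrite !mulmxA hf -mulmxA ophi' mulmx1.
Qed.

Lemma exists_orth {R : realType} {n : nat} (h u : 'rV[R]_n) : (3 <= n)%N ->
  exists w, [/\ dotv w w = 1, dotv w h = 0 & dotv w u = 0].
Proof.
move=> n3.
set A := (col_mx h u)^T.
have rk : (1 <= \rank (kermx A))%N.
  rewrite mxrank_ker; have := rank_leq_col A; lia.
have [i wi] : exists i, row i (kermx A) != 0.
  apply: contrapT => hall; move: rk.
  have -> : kermx A = 0.
    apply/row_matrixP => i; rewrite row0; apply/eqP; apply: contrapT => hi.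
    by apply: hall; exists i; apply/negP.
  by rewrite mxrank0.
set w0 := row i (kermx A) in wi.
have w0A : w0 *m A = 0 by rewrite /w0 -row_mul mulmx_ker row0.
move: w0A; rewrite /A tr_col_mx mul_mx_row => /eqP; rewrite row_mx_eq0 => /andP[/eqP e1 /eqP e2].
have d1 : dotv w0 h = 0 by rewrite dotvE e1 mxE.
have d2 : dotv w0 u = 0 by rewrite dotvE e2 mxE.
have pos : 0 < dotv w0 w0.
  rewrite lt_def dotv_ge0 andbT; apply/eqP => /dotv_eq0 /eqP; exact/negP.
exists ((Num.sqrt (dotv w0 w0))^-1 *: w0); split.
- rewrite dotvZl dotvZr mulrA -expr2 exprVn sqr_sqrtr ?mulVf //; [exact: lt0r_neq0 | exact: ltW].
- by rewrite dotvZl d1 mulr0.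
- by rewrite dotvZl d2 mulr0.
Qed.

Lemma pt_props {R : realType} {n : nat} (h u w : 'rV[R]_n) (a b : R) :
  dotv h h = 1 -> dotv u u = 1 -> dotv w w = 1 ->
  dotv u h = 0 -> dotv w h = 0 -> dotv w u = 0 -> a ^+ 2 + b ^+ 2 <= 1 ->
  let p := a *: h + b *: u + Num.sqrt (1 - a ^+ 2 - b ^+ 2) *: w in
  [/\ dotv p p = 1, dotv p h = a & dotv p u = b].
Proof.
move=> hh1 uu1 ww1 uh wh wu ab p.
have hu : dotv h u = 0 by rewrite dotvC.
have hw : dotv h w = 0 by rewrite dotvC.
have uw : dotv u w = 0 by rewrite dotvC.
rewrite /p; set r := Num.sqrt _.
have r2 : r * r = 1 - a ^+ 2 - b ^+ 2.
  by rewrite -expr2 sqr_sqrtr //; lra.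
rewrite !dotvDl !dotvDr !dotvZl !dotvZr hh1 uu1 ww1 uh wh wu hu hw uw.
split; [|ring|ring].
by rewrite !mulr0 !mulr1 !addr0 !add0r r2 !expr2; ring.
Qed.
Lemma ctest {R : realType} {n : nat} (h u w : 'rV[R]_n) :
  continuous (fun a : R => a *: h + 0 *: u + Num.sqrt (1 - a ^+ 2 - 0 ^+ 2) *: w).
Proof.
move=> a.
apply: cvgD; first apply: cvgD.
- exact: scalel_continuous.
- exact: cvg_cst.
apply: cvgZr_tmp.
apply: continuous_comp; last exact: sqrt_continuous.
apply: cvgB; last exact: cvg_cst.
apply: cvgB; first exact: cvg_cst.
apply: cvgM; exact: cvg_id.
Qed.

Lemma cs_unit {R : realType} {n : nat} (x z : 'rV[R]_n) :
  dotv x x = 1 -> dotv z z = 1 -> (dotv x z) ^+ 2 <= 1.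
Proof.
move=> xx zz; have := dotv_ge0 (x - dotv x z *: z).
rewrite !dotvBl !dotvBr !dotvZl !dotvZr xx zz (dotvC z x); lra.
Qed.

Lemma core {R : realType} {n : nat} (E : set 'rV[R]_n) (h g : 'rV[R]_n) :
  (3 <= n)%N -> dotv h h = 1 -> dotv g g = 1 -> (dotv h g) ^+ 2 < 1 ->
  invE E h -> invE E g -> E `<=` @sphere R n -> E !=set0 -> closed E ->
  E = @sphere R n.
Proof.
move=> n3 hh1 gg1 c1 invh invg ES [x0 Ex0] clE.
set c := dotv h g in c1.
set s := Num.sqrt (1 - c ^+ 2).
have s0 : 0 < s by rewrite sqrtr_gt0; lra.
have s2 : s ^+ 2 = 1 - c ^+ 2 by rewrite sqr_sqrtr //; lra.
set u := s^-1 *: (g - c *: h).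
have uh : dotv u h = 0.
  by rewrite dotvZl dotvBl dotvZl hh1 (dotvC g h) -/c mulr1 subrr mulr0.
have uu : dotv u u = 1.
  rewrite dotvZl dotvZr !dotvBl !dotvBr !dotvZl !dotvZr hh1 gg1 (dotvC g h) -/c.
  rewrite mulrA -expr2 exprVn s2; field; lra.
have gdec : forall x, dotv x g = c * dotv x h + s * dotv x u.
  move=> x; rewrite dotvZr dotvBr dotvZr mulrA divff ?lt0r_neq0 // mul1r; ring.
have [w [ww wh wu]] := exists_orth h u n3.
pose pt a b := a *: h + b *: u + Num.sqrt (1 - a ^+ 2 - b ^+ 2) *: w.
have ptP : forall a b, a ^+ 2 + b ^+ 2 <= 1 ->
    [/\ dotv (pt a b) (pt a b) = 1, dotv (pt a b) h = a & dotv (pt a b) u = b].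
  by move=> a b ab; apply: pt_props.
have LAh : forall x y, E x -> @sphere R n y -> dotv x h = dotv y h -> E y.
  move=> x y Ex Sy e; apply: (@levelA R n E h x y invh Ex) => //.
  by rewrite (ES _ Ex); rewrite /sphere /= in Sy; rewrite Sy.
have LAg : forall x y, E x -> @sphere R n y -> dotv x g = dotv y g -> E y.
  move=> x y Ex Sy e; apply: (@levelA R n E g x y invg Ex) => //.
  by rewrite (ES _ Ex); rewrite /sphere /= in Sy; rewrite Sy.
have pt0 : forall a : R, a ^+ 2 <= 1 -> a ^+ 2 + 0 ^+ 2 <= 1.
  by move=> a ha; rewrite expr0n /= addr0.
have step : forall a a' : R, E (pt a 0) -> a ^+ 2 <= 1 -> a' ^+ 2 <= 1 ->
    a' ^+ 2 + c ^+ 2 * a ^+ 2 - 2 * c ^+ 2 * a * a' <= 1 - c ^+ 2 -> E (pt a' 0).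
  move=> a a' Ea ha ha' hq.
  set b' := (c * a - c * a') / s.
  have hb : a' ^+ 2 + b' ^+ 2 <= 1.
    have e : b' ^+ 2 * s ^+ 2 = (c * a - c * a') ^+ 2.
      by rewrite /b'; field; rewrite lt0r_neq0.
    rewrite s2 in e; nra.
  have [p1 p2 p3] := ptP a 0 (pt0 a ha).
  have [q1 q2 q3] := ptP a' b' hb.
  have E2 : E (pt a' b').
    apply: (LAg _ _ Ea) => //; rewrite !gdec p2 p3 q2 q3 /b'; field.
    by rewrite lt0r_neq0.
  have [r1 r2 r3] := ptP a' 0 (pt0 a' ha').
  by apply: (LAh _ _ E2) => //; rewrite q2 r2.
have quad : forall a : R, -1 <= a <= 1 -> exists2 d, 0 < d & forall a' : R,
    -1 <= a' <= 1 -> `|a' - a| < d ->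
    a' ^+ 2 + c ^+ 2 * a ^+ 2 - 2 * c ^+ 2 * a * a' <= 1 - c ^+ 2.
  move=> a /andP[la ua].
  have c2 : c ^+ 2 = 1 - s ^+ 2 by rewrite s2; ring.
  have t0 : 0 < s ^+ 2 by rewrite exprn_gt0.
  have t1 : s ^+ 2 <= 1 by rewrite s2; nra.
  rewrite c2; move: t0 t1; set t := s ^+ 2 => t0 t1.
  case: (eqVneq a 1) => [->|a1].
    exists (2 * t); first nra.
    move=> a' /andP[la' ua']; rewrite ltr_distlC => /andP[h1 h2]; nra.
  case: (eqVneq a (-1)) => [->|a2].
    exists (2 * t); first nra.
    move=> a' /andP[la' ua']; rewrite ltr_distlC => /andP[h1 h2]; nra.
  have la1 : -1 < a by rewrite lt_def a2 la.
  have ua1 : a < 1 by rewrite lt_def eq_sym a1 ua.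
  set m := (1 - a ^+ 2) * t.
  have m0 : 0 < m by rewrite /m; apply: mulr_gt0 => //; nra.
  have m1 : m <= 1 by rewrite /m; nra.
  exists (m / 3); first by apply: divr_gt0.
  move=> a' /andP[la' ua']; rewrite ltr_distlC => /andP[h1 h2].
  set e := a' - a.
  have -> : a' = a + e by rewrite /e; ring.
  have e1 : - (m / 3) < e by rewrite /e; lra.
  have e2 : e < m / 3 by rewrite /e; lra.
  have ee : e * e <= m / 3 by nra.
  have ae : 2 * a * t * e <= 2 * (m / 3).
    have q1 : -1 <= a * t by nra.
    have q2 : a * t <= 1 by nra.
    nra.
  have : (1 - a ^+ 2) * t = m by [].
  nra.
have sq1 : forall a : R, -1 <= a <= 1 -> a ^+ 2 <= 1.
  by move=> a /andP[? ?]; nra.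
have local : forall a : R, -1 <= a <= 1 -> E (pt a 0) -> exists2 d, 0 < d &
    forall a' : R, -1 <= a' <= 1 -> `|a' - a| < d -> E (pt a' 0).
  move=> a ha Ea; have [d d0 hd] := quad a ha.
  exists d => // a' ha' ad; apply: (step a) => //; [exact: sq1|exact: sq1|exact: hd].
set T := [set a : R | (-1 <= a <= 1) /\ E (pt a 0)].
have Tseg : T = `[-1, 1].
  apply: (@segment_connected R (-1) 1 T).
  - exists (dotv x0 h).
    have h2 := cs_unit _ _ (ES _ Ex0) hh1.
    have hr : -1 <= dotv x0 h <= 1 by apply/andP; split; nra.
    split => //.
    have [r1 r2 r3] := ptP (dotv x0 h) 0 (pt0 _ h2).
    by apply: (LAh _ _ Ex0) => //; rewrite r2.
  - exists [set x : R | exists2 d, 0 < d &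
        forall a', -1 <= a' <= 1 -> `|a' - x| < d -> T a'].
      rewrite openE => x [d d0 hd]; rewrite /interior; apply/nbhs_ballP.
      exists (d / 2) => /=; first by apply: divr_gt0.
      move=> z; rewrite -ball_normE /ball_ /= => xz.
      exists (d / 2); first by apply: divr_gt0.
      move=> a' ha' az; apply: hd => //.
      rewrite (_ : a' - x = (a' - z) + (z - x)); last by ring.
      rewrite distrC in xz.
      apply: (le_lt_trans (ler_normD _ _)); lra.
    apply/seteqP; split => x.
      move=> [ix Ex]; split; first by rewrite /= in_itv /=.
      have [d d0 hd] := local x ix Ex.
      by exists d => // a' ha' ad; split => //; apply: hd.
    move=> [ix [d d0 hd]]; apply: hd; first by move: ix; rewrite /= in_itv.
    by rewrite subrr normr0.
  - exists T.
      have -> : T = `[-1, 1] `&` ((fun a => pt a 0) @^-1` E).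
        by apply/seteqP; split => x [ix Ex]; split => //; rewrite /= in_itv in ix *.
      apply: closedI; first exact: itv_closed.
      by apply: preimage_closed => // a _; rewrite /pt; exact: ctest.
    apply/seteqP; split => x; last by case.
    move=> [ix Ex]; split => //; by rewrite /= in_itv.
move=> {local quad step}.
apply/seteqP; split; first exact: ES.
move=> x Sx.
have h2 := cs_unit _ _ Sx hh1.
have hr : T (dotv x h).
  by rewrite Tseg /= in_itv /=; apply/andP; split; nra.
case: hr => _ Ex.
have [r1 r2 r3] := ptP (dotv x h) 0 (pt0 _ h2).
by apply: (LAh _ _ Ex) => //; rewrite r2.
Qed.

Lemma cs_eq {R : realType} {n : nat} (x z : 'rV[R]_n) :
  dotv x x = 1 -> dotv z z = 1 -> (dotv z x) ^+ 2 = 1 -> x = dotv z x *: z.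
Proof.
move=> xx zz cc; apply/eqP; rewrite -subr_eq0; apply/eqP/dotv_eq0.
rewrite !dotvBl !dotvBr !dotvZl !dotvZr xx zz (dotvC x z).
by rewrite mulr1 -expr2 cc !subrr.
Qed.

Theorem lemma3p1 (R : realType) (n : nat) (H : 'M[R]_(1, n))
    (phi : 'M[R]_n) (E : set 'rV[R]_n) :
  (3 <= n)%N ->
  \rank H = 1%N ->
  orthogonal_mx phi ->
  mx_image phi (subspace_of H) <> subspace_of H ->
  E `<=` @sphere R n ->
  E !=set0 ->
  closed E ->
  mx_image phi E = E ->
  (forall psi : 'M[R]_n, orthogonal_mx psi ->
     (forall x, subspace_of H x -> x *m psi = x) -> mx_image psi E = E) ->
  E = @sphere R n.
Proof.
move=> n3 rH ophi imH ES E0 clE imE hpsi.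
have ophi' : phi *m phi^T = 1%:M := ophi.
have H0 : H != 0 by apply/eqP => H0; move: rH; rewrite H0 mxrank0.
have HH : 0 < dotv H H.
  by rewrite lt_def dotv_ge0 andbT; apply/eqP => /dotv_eq0 /eqP; apply/negP.
set k := (Num.sqrt (dotv H H))^-1.
have k0 : k != 0 by rewrite invr_eq0 lt0r_neq0 // sqrtr_gt0.
set h := k *: H.
have hh1 : dotv h h = 1.
  rewrite dotvZl dotvZr mulrA -expr2 exprVn sqr_sqrtr ?mulVf //; [exact: lt0r_neq0 | exact: ltW].
have invH : invE E H.
  move=> psi opsi Hf x Ex.
  have := hpsi psi opsi; rewrite /subspace_of /= => /(_ _) im.
  have {}im : mx_image psi E = E.
    apply: im => y /submxP [D ->]; by rewrite -mulmxA Hf.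
  by rewrite -im; exists x.
have invh : invE E h by apply: invE_scale.
set g := h *m phi.
have invg : invE E g by apply: invE_phi.
have gg1 : dotv g g = 1 by rewrite /g dotvMl -mulmxA ophi' mulmx1.
set c := dotv h g.
have c1 : c ^+ 2 <= 1 by apply: cs_unit.
have c2 : c ^+ 2 < 1.
  rewrite lt_neqAle c1 andbT; apply/eqP => cc.
  have gch : g = c *: h.
    by apply: cs_eq.
  have Hphi : H *m phi = c *: H.
    move: gch; rewrite /g /h -scalemxAl => /(congr1 (fun z => k^-1 *: z)).
    by rewrite !scalerA mulVf // scale1r mulrAC mulVf // mul1r.
  have cc1 : c * c = 1 by rewrite -expr2.
  apply: imH; apply/seteqP; split.
    move=> _ [x /submxP [D ->] <-]; rewrite /subspace_of /=.
    by rewrite -mulmxA Hphi -scalemxAr; apply: scalemx_sub; apply/submxP; exists D.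
  move=> y hy; exists (c *: y).
    by rewrite /subspace_of /=; apply: scalemx_sub.
  move: hy => /submxP [D ->].
  by rewrite -scalemxAl -mulmxA Hphi -scalemxAr scalerA cc1 scale1r.
exact: (@core R n E h g n3 hh1 gg1 c2 invh invg ES E0 clE).
Qed.
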